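(* Let $n\in\{2,4,8\}$ and $V_0=\{v\in\{-1,1\}^n : v_1=1,\ \sum_i v_i=0\}$. Then there exist signs $\varepsilon_v\in\{-1,1\}$, $v\in V_0$, and a vector $w\in\mathbb{Z}^n$ with $w_i\ge -1$ for all $i$, such that $\sum_{v\in V_0}\varepsilon_v v=w$. *)

(* Defs.v *)
From mathcomp Require Import all_boot all_order all_algebra.
Set Implicit Arguments. Unset Strict Implicit. Unset Printing Implicit Defensive.
Import Order.TTheory GRing.Theory Num.Theory.
Local Open Scope ring_scope.

(* A vector v in {-1,1}^n is encoded by b : {ffun 'I_n -> bool}, with
   v_i = 1 if b i = true and v_i = -1 if b i = false. Coordinates are
   0-indexed: paper's v_1 is the coordinate with index 0. *)
Definition sgb (b : bool) : int := if b then 1 else -1.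

Definition pmvec (n : nat) (b : {ffun 'I_n -> bool}) (i : 'I_n) : int := sgb (b i).

Definition V0 (n : nat) : {set {ffun 'I_n -> bool}} :=
  [set b : {ffun 'I_n -> bool} |
     [forall i : 'I_n, (nat_of_ord i == 0%N) ==> b i]
     && (\sum_(i < n) pmvec b i == 0)].

(* Main.v *)
Require Import Defs.
From mathcomp Require Import all_boot all_order all_algebra.
Import Order.TTheory GRing.Theory Num.Theory.
Local Open Scope ring_scope.

Definition sumL {T} (f : T -> int) (l : seq T) : int := foldr (fun s a => f s + a) 0 l.

Lemma sumLE {T} (f : T -> int) l : \sum_(s <- l) f s = sumL f l.
Proof. elim: l => [|x l IH]; by rewrite ?big_nil ?big_cons ?IH. Qed.

Fixpoint allseqs (n : nat) : seq (seq bool) :=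
  if n is m.+1 then [seq true :: s | s <- allseqs m] ++ [seq false :: s | s <- allseqs m]
  else [:: [::]].

Lemma size_allseqs n s : s \in allseqs n -> size s = n.
Proof.
elim: n s => [|n IH] s /=; first by rewrite inE => /eqP->.
by rewrite mem_cat => /orP[] /mapP[t /IH <- ->].
Qed.

Definition ffs n (s : seq bool) : {ffun 'I_n -> bool} := [ffun i : 'I_n => nth false s i].

Lemma sum_ffun n (F : {ffun 'I_n -> bool} -> int) :
  \sum_b F b = \sum_(s <- allseqs n) F (ffs n s).
Proof.
elim: n F => [|n IH] F.
  rewrite /= big_seq1 (big_pred1 (ffs 0 [::])) // => b /=.
  by apply/esym/eqP/ffunP => -[].
pose h (p : bool * {ffun 'I_n -> bool}) : {ffun 'I_n.+1 -> bool} :=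
  [ffun i => if unlift ord0 i is Some j then p.2 j else p.1].
pose g (f : {ffun 'I_n.+1 -> bool}) := (f ord0, [ffun j => f (lift ord0 j)]).
rewrite (reindex h) /=; last first.
  exists g => [[x b] _ | f _]; rewrite /g /h.
    by congr pair; [rewrite ffunE unlift_none | apply/ffunP => j; rewrite !ffunE liftK].
  apply/ffunP => i; rewrite ffunE; case: unliftP => [j ->|->]; by rewrite ?ffunE.
rewrite -(pair_bigA _ (fun x b => F (h (x, b)))) /= big_bool /=.
rewrite !IH big_cat !big_map /=.
have E x s : h (x, ffs n s) = ffs n.+1 (x :: s).
  apply/ffunP => i; rewrite !ffunE; case: unliftP => [j ->|->] //=.
  by rewrite ffunE.
by congr (_ + _); apply: eq_bigr => s _; rewrite E.
Qed.

Definition negl : seq (seq bool) := [:: [:: true; true; true; false; false; true; false; false]; [:: true; true; true; false; false; false; false; true]; [:: true; true; false; true; false; true; false; false]; [:: true; true; false; true; false; false; true; false]; [:: true; true; false; false; true; false; true; false]; [:: true; true; false; false; true; false; false; true]; [:: true; true; false; false; false; true; true; false]; [:: true; true; false; false; false; true; false; true]; [:: true; false; true; true; true; false; false; false]; [:: true; false; true; true; false; true; false; false]; [:: true; false; true; true; false; false; false; true]; [:: true; false; true; false; true; true; false; false]; [:: true; false; true; false; false; false; true; true]; [:: true; false; false; true; true; false; true; false]; [:: true; false; false; true; false; false; true; true]; [:: true; false; false; false; true; true; true; false]; [:: true; false; false; false; true; true; false; true]; [:: true; false; false; false; true; false; true; true]; [:: true; false]].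

Definition epsf (n : nat) (b : {ffun 'I_n -> bool}) : bool :=
  ~~ ([seq b i | i <- enum 'I_n] \in negl).

Definition good n (s : seq bool) :=
  ((0 < n)%N ==> nth false s 0) && (sumL (fun k => sgb (nth false s k)) (iota 0 n) == 0).

Definition E n k := sumL (fun s => if good n s then sgb (~~ (s \in negl)) * sgb (nth false s k) else 0) (allseqs n).

Lemma key n (i : 'I_n) : \sum_(b in V0 n) sgb (epsf n b) * pmvec b i = E n i.
Proof.
rewrite /E big_mkcond sum_ffun -sumLE big_seq [RHS]big_seq; apply: eq_bigr => s /size_allseqs Hs.
have -> : ffs n s \in V0 n = good n s.
  rewrite inE /good; congr andb.
    apply/forallP/implyP => [H n0 | H j].
      by have := H (Ordinal n0); rewrite ffunE /=.
    apply/implyP => /eqP j0; rewrite ffunE j0; by apply: H; rewrite -j0 (ltn_ord j).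
  under eq_bigr => k _ do rewrite /pmvec ffunE.
  by rewrite -(big_mkord xpredT (fun k => sgb (nth false s k))) /index_iota subn0 sumLE.
have -> : epsf n (ffs n s) = ~~ (s \in negl).
  rewrite /epsf (eq_map (g := fun i : 'I_n => nth false s i)); last by move=> j; rewrite ffunE.
  by rewrite (map_comp (nth false s) val) val_enum_ord -/(mkseq _ _) -Hs mkseq_nth.
by rewrite /pmvec ffunE.
Qed.

Lemma fin n : all (fun k => (-1 <= E n k)) (iota 0 n) ->
  forall i : 'I_n, -1 <= \sum_(b in V0 n) sgb (epsf n b) * pmvec b i.
Proof. move=> /allP H i; rewrite key; apply: H; by rewrite mem_iota /= ltn_ord. Qed.

Theorem lemmaA2 (n : nat) (hn : n \in [:: 2%N; 4%N; 8%N]) :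
  exists (eps : {ffun 'I_n -> bool} -> bool) (w : 'I_n -> int),
    (forall i : 'I_n, -1 <= w i) /\
    (forall i : 'I_n, \sum_(b in V0 n) sgb (eps b) * pmvec b i = w i).
Proof.
exists (epsf n), (fun i => \sum_(b in V0 n) sgb (epsf n b) * pmvec b i).
split=> //; apply: fin.
move: hn; rewrite !inE => /or3P[]/eqP->; vm_compute; reflexivity.
Qed.
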